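(* Let $\mathcal G_1,\mathcal G_2$ be finite graphs. Suppose there exist $\beta_1,\beta_2\in(0,\infty)$ such that \[ \lim_{n\to\infty}\frac{\log s_n(W(\mathcal G_i))}{n\log n}=\beta_i \quad\text{for } i=1,2 . \] Then \[ \lim_{n\to\infty}\frac{\log s_n(W(\mathcal G_1\star\mathcal G_2))}{n\log n}=\max\{\beta_1,\beta_2\}. \] Furthermore, if at least one of $\mathcal G_1,\mathcal G_2$ is not complete, then \[ \gamma(\mathcal G_1\star\mathcal G_2)=\max(\gamma(\mathcal G_1),\gamma(\mathcal G_2)). \]
   Context: Graphs are finite simple graphs. $W(\mathcal G)$ is the right-angled Coxeter group \[ \langle \sigma_v,\ v\in\mathcal G\mid \sigma_v^2=1,\ \sigma_v\sigma_w=\sigma_w\sigma_v \text{ for adjacent } v,w\rangle . \] $s_n(\Gamma)$ is the number of subgroups of index exactly $n$ in $\Gamma$. The join $\mathcal G_1\star\mathcal G_2$ is the graph on the disjoint union of the vertex sets. Two vertices in the same $\mathcal G_i$ are adjacent iff they are adjacent in $\mathcal G_i$, and any two vertices in different $\mathcal G_i$ are adjacent. In particular $W(\mathcal G_1\star\mathcal G_2)=W(\mathcal G_1)\times W(\mathcal G_2)$. A clique collection is an induced subgraph whose connected components are complete graphs. For a clique collection $\mathcal C$ with components $\mathcal C_1,\dots,\mathcal C_q$, set $w(\mathcal C)=\sum_i(1-2^{-|\mathcal C_i|})$. Then $\gamma(\mathcal G)$ is the maximum of $w(\mathcal C)$ over all clique collections $\mathcal C$ of $\mathcal G$. *)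

(* Defs.v *)
From HB Require Import structures.
From mathcomp Require Import all_boot all_order all_algebra.
From mathcomp Require Import all_classical all_reals all_analysis.
Set Implicit Arguments. Unset Strict Implicit. Unset Printing Implicit Defensive.
Import Order.TTheory GRing.Theory Num.Theory.
Local Open Scope classical_set_scope.
Local Open Scope ring_scope.

Definition simple_graph (V : finType) (e : rel V) : Prop :=
  symmetric e /\ irreflexive e.

Definition complete_graph (V : finType) (e : rel V) : Prop :=
  forall x y : V, x != y -> e x y.

Definition join_rel (V1 V2 : finType) (e1 : rel V1) (e2 : rel V2) : rel (V1 + V2) :=
  fun a b => match a, b with
  | inl x, inl y => e1 x y
  | inr x, inr y => e2 x y
  | _, _ => true
  end.

(** The right-angled Coxeter group W(G), as words in the generators sigma_v
    (elements of seq V) modulo the congruence generated by the defining relations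
    sigma_v^2 = 1 and sigma_v sigma_w = sigma_w sigma_v for adjacent v, w. *)
Inductive raag_eq (V : finType) (e : rel V) : seq V -> seq V -> Prop :=
| req_refl u : raag_eq e u u
| req_sym u v : raag_eq e u v -> raag_eq e v u
| req_trans u v w : raag_eq e u v -> raag_eq e v w -> raag_eq e u w
| req_sq (u w : seq V) (v : V) : raag_eq e (u ++ v :: v :: w) (u ++ w)
| req_comm (u w : seq V) (v x : V) : e v x ->
    raag_eq e (u ++ v :: x :: w) (u ++ x :: v :: w).

(** Subgroups of W(G), represented as the set of words representing their
    elements (saturated for raag_eq). Multiplication is concatenation, and the
    inverse of a word is its reverse (the generators are involutions). *)
Definition is_subgroup (V : finType) (e : rel V) (H : set (seq V)) : Prop :=
  [/\ H [::],
      (forall u v, raag_eq e u v -> H u -> H v),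
      (forall u v, H u -> H v -> H (u ++ v)) &
      (forall u, H u -> H (rev u))].

(** H has index exactly n: the left cosets uH (uH = vH iff u^-1 v in H)
    are in bijection with 'I_n. *)
Definition has_index (V : finType) (e : rel V) (H : set (seq V)) (n : nat) : Prop :=
  exists f : seq V -> 'I_n,
    (forall i : 'I_n, exists u, f u = i) /\
    (forall u v, f u = f v <-> H (rev u ++ v)).

Definition subgroups_of_index (V : finType) (e : rel V) (n : nat) : set (set (seq V)) :=
  [set H | is_subgroup e H /\ has_index e H n].

(** s_n(W(G)) : the number of subgroups of index exactly n
    (the cardinal k with subgroups_of_index #= `I_k; 0 if there is none). *)
Definition s_n (V : finType) (e : rel V) (n : nat) : nat :=
  xget 0%N [set k | (subgroups_of_index e n #= `I_k)%card].

Definition induced_rel (V : finType) (e : rel V) (S : {set V}) : rel V :=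
  fun x y => [&& x \in S, y \in S & e x y].

Definition component (V : finType) (e : rel V) (S : {set V}) (x : V) : {set V} :=
  [set y in S | connect (induced_rel e S) x y].

Definition components (V : finType) (e : rel V) (S : {set V}) : {set {set V}} :=
  [set component e S x | x in S].

Definition clique_collection (V : finType) (e : rel V) (S : {set V}) : bool :=
  [forall C in components e S, forall x in C, forall y in C, (x != y) ==> e x y].

Definition weight (R : realType) (V : finType) (e : rel V) (S : {set V}) : R :=
  \sum_(C in components e S) (1 - (2%:R : R) ^- #|C|).

Definition gamma (R : realType) (V : finType) (e : rel V) : R :=
  \big[Num.max/0]_(S : {set V} | clique_collection e S) weight R e S.

(* Main.v *)
Require Import Defs.
From HB Require Import structures.
From mathcomp Require Import all_boot all_order all_algebra.
From mathcomp Require Import all_classical all_reals all_analysis.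
From mathcomp.algebra_tactics Require Import ring lra.
From mathcomp Require Import zify.
Import Order.TTheory GRing.Theory Num.Theory numFieldNormedType.Exports.
Local Open Scope classical_set_scope.
Local Open Scope ring_scope.

Module MW.
Set Implicit Arguments. Unset Strict Implicit. Unset Printing Implicit Defensive.
Local Open Scope ring_scope.

Local Open Scope classical_set_scope.


Section Words.
Variables (V : finType) (e : rel V).
Hypothesis esym : symmetric e.
Local Notation req := (raag_eq e).

Lemma req_catl w u v : req u v -> req (w ++ u) (w ++ v).
Proof.
elim=> {u v} [u|u v _ IH|u v x _ IH1 _ IH2|u x v|u x v y evy].
- exact: req_refl.
- exact: req_sym.
- exact: req_trans IH2.
- by rewrite !catA; apply: req_sq.
- by rewrite !catA; apply: req_comm.
Qed.

Lemma req_catr w u v : req u v -> req (u ++ w) (v ++ w).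
Proof.
elim=> {u v} [u|u v _ IH|u v x _ IH1 _ IH2|u x v|u x v y evy].
- exact: req_refl.
- exact: req_sym.
- exact: req_trans IH2.
- by rewrite -!catA /=; apply: req_sq.
- by rewrite -!catA /=; apply: req_comm.
Qed.

Lemma req_cat u u' v v' : req u u' -> req v v' -> req (u ++ v) (u' ++ v').
Proof.
move=> h1 h2; apply: req_trans (req_catr _ h1) _; exact: req_catl.
Qed.

Lemma req_rev u v : req u v -> req (rev u) (rev v).
Proof.
elim=> {u v} [u|u v _ IH|u v x _ IH1 _ IH2|u x v|u x v y evy].
- exact: req_refl.
- exact: req_sym.
- exact: req_trans IH2.
- rewrite !rev_cat !rev_cons -!cats1 -!catA /=; exact: req_sq.
- rewrite !rev_cat !rev_cons -!cats1 -!catA /=; apply: req_comm.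
  by rewrite esym.
Qed.

Lemma req_revK u w : req (rev u ++ u ++ w) w.
Proof.
elim: u w => [|x u IH] w /=; first exact: req_refl.
rewrite rev_cons -cats1 -catA /=.
apply: req_trans (IH w); exact: req_sq.
Qed.

Lemma req_Krev u w : req (u ++ rev u ++ w) w.
Proof. by have := req_revK (rev u) w; rewrite revK. Qed.

End Words.

Section Subgroups.
Variables (V : finType) (e : rel V).
Hypothesis esym : symmetric e.
Local Notation req := (raag_eq e).
Variable H : set (seq V).
Hypothesis Hsub : is_subgroup e H.

Lemma sg_nil : H [::]. Proof. by case: Hsub. Qed.
Lemma sg_req u v : req u v -> H u -> H v. Proof. by case: Hsub => _ h _ _; apply: h. Qed.
Lemma sg_reqE u v : req u v -> H u = H v.
Proof. move=> h; apply/propext; split; apply: sg_req => //; exact: req_sym. Qed.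
Lemma sg_cat u v : H u -> H v -> H (u ++ v). Proof. by case: Hsub => _ _ h _; apply: h. Qed.
Lemma sg_rev u : H u -> H (rev u). Proof. by case: Hsub => _ _ _ h; apply: h. Qed.
Lemma sg_revE u : H (rev u) = H u.
Proof. by apply/propext; split => /sg_rev //; rewrite revK. Qed.

Lemma sg_cosym u v : H (rev u ++ v) -> H (rev v ++ u).
Proof. by move/sg_rev; rewrite rev_cat revK. Qed.

Lemma sg_cotrans u v w : H (rev u ++ v) -> H (rev v ++ w) -> H (rev u ++ w).
Proof.
move=> h1 h2; have := sg_cat h1 h2; rewrite -catA.
apply: sg_req; apply: req_catl; exact: req_Krev.
Qed.

End Subgroups.

End MW.
Import MW.

Module MC.
Set Implicit Arguments. Unset Strict Implicit. Unset Printing Implicit Defensive.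
Local Open Scope ring_scope.

Local Open Scope classical_set_scope.

Local Open Scope card_scope.

Lemma card_eq_leW T U (A : set T) (B : set U) : A #= B -> A #<= B.
Proof. by rewrite card_eq_le => /andP[]. Qed.

Lemma card_inj_le (T T' : Type) (S : set T) (S' : set T') m m' (psi : T -> T') :
  S #= `I_m -> S' #= `I_m' -> {in S &, injective psi} ->
  (forall x, S x -> S' (psi x)) -> (m <= m')%N.
Proof.
move=> hS hS' inj hmap; rewrite -card_le_II.
apply: (card_le_trans (card_eq_leW (card_esym hS))).
apply: (card_le_trans (card_eq_leW (card_esym (inj_card_eq inj)))).
apply: (card_le_trans _ (card_eq_leW hS')).
by apply: subset_card_le => _ [x Sx <-]; apply: hmap.
Qed.

Lemma card_data (T : Type) (U : finType) (S : set T) (P : T -> U -> Prop) :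
  (forall x, S x -> exists d, P x d) ->
  (forall x y d, S x -> S y -> P x d -> P y d -> x = y) ->
  exists m, S #= `I_m /\ (m <= #|U|)%N.
Proof.
move=> hex huniq.
have [phi hphi] : {phi : T -> option U &
   forall x, S x -> exists d, phi x = Some d /\ P x d}.
  apply: (@choice T (option U) (fun x o => S x -> exists d, o = Some d /\ P x d)) => x; case: (pselect (S x)) => Sx.
    by have [d Pd] := hex x Sx; exists (Some d) => _; exists d.
  by exists None.
pose psi (x : T) : nat := if phi x is Some d then enum_rank d else 0%N.
have inj : {in S &, injective psi}.
  move=> x y; rewrite !in_setE => Sx Sy.
  have [dx [ex Px]] := hphi x Sx; have [dy [ey Py]] := hphi y Sy.
  rewrite /psi ex ey => /val_inj/enum_rank_inj edxy.
  by apply: huniq Sx Sy Px _; rewrite edxy.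
have sub : psi @` S `<=` `I_#|U|.
  move=> _ [x Sx <-]; have [d [ex _]] := hphi x Sx.
  by rewrite /psi ex /=; apply: ltn_ord.
have [m hm] : finite_set (psi @` S).
  by apply: sub_finite_set sub _; exact: finite_II.
exists m; split.
  exact: card_eq_trans (card_esym (inj_card_eq inj)) hm.
rewrite -card_le_II; apply: (card_le_trans (card_eq_leW (card_esym hm))).
exact: subset_card_le.
Qed.

Lemma sn_spec (V : finType) (e : rel V) n :
  finite_set (subgroups_of_index e n) ->
  subgroups_of_index e n #= `I_(s_n e n).
Proof.
move=> [m hm]; rewrite /s_n.
by apply: (@xgetPex _ 0%N [set k | subgroups_of_index e n #= `I_k]); exists m.
Qed.

End MC.
Import MC.

Module MF.
Set Implicit Arguments. Unset Strict Implicit. Unset Printing Implicit Defensive.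
Local Open Scope ring_scope.

Local Open Scope classical_set_scope.

Local Open Scope card_scope.

Definition idx_spec (V : Type) (H : set (seq V)) (n : nat) (f : seq V -> 'I_n) :=
  (forall i : 'I_n, exists u, f u = i) /\ (forall u v, f u = f v <-> H (rev u ++ v)).

Section Fin.
Variables (V : finType) (e : rel V).
Hypothesis esym : symmetric e.

Lemma idx_nil (H : set (seq V)) (n : nat) (f : seq V -> 'I_n) : idx_spec H f -> forall u, f [::] = f u <-> H u.
Proof. by case=> _ h u; rewrite h. Qed.

Lemma idx_cons (H : set (seq V)) n (f : seq V -> 'I_n) : is_subgroup e H -> idx_spec H f ->
  forall v u u', f u = f u' -> f (v :: u) = f (v :: u').
Proof.
move=> Hs [_ h] v u u' /h Hu; apply/h.
rewrite rev_cons -cats1 -catA /=.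
by move: Hu; apply: (sg_req Hs); apply: req_sym; exact: req_sq.
Qed.

Lemma sub_finite n : finite_set (subgroups_of_index e n).
Proof.
pose U := ({ffun V -> {ffun 'I_n -> 'I_n}} * 'I_n)%type.
pose P (H : set (seq V)) (d : U) := exists f : seq V -> 'I_n,
  [/\ idx_spec H f, f [::] = d.2 & forall v u, d.1 v (f u) = f (v :: u)].
have [] := @card_data _ U (subgroups_of_index e n) P; last by move=> m [hm _]; exists m.
  move=> H [Hs [f [fs fi]]].
  have [rep hrep] : {rep : 'I_n -> seq V & forall i, f (rep i) = i}.
    by apply: (@choice _ _ (fun i u => f u = i)).
  exists ([ffun v => [ffun p => f (v :: rep p)]], f [::]), f; split => //=.
  move=> v u; rewrite !ffunE; apply: (idx_cons Hs) => //; exact: hrep.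
move=> H1 H2 [rho p0] [Hs1 _] [Hs2 _] [f1 [sp1 /= e1 r1]] [f2 [sp2 /= e2 r2]].
have key (H : set (seq V)) f : idx_spec H f -> f [::] = p0 ->
   (forall v u, rho v (f u) = f (v :: u)) -> forall u, H u <-> p0 = foldr (fun v p => rho v p) p0 u.
  move=> sp ef rf u; rewrite -(idx_nil sp) ef.
  suff -> : f u = foldr (fun v p => rho v p) p0 u by [].
  by elim: u => [|v u IH] //=; rewrite -rf IH.
apply/funext => u; apply/propext; rewrite (key _ _ sp1 e1 r1) (key _ _ sp2 e2 r2).
by [].
Qed.

Lemma sn_specV n : subgroups_of_index e n #= `I_(s_n e n).
Proof. exact/sn_spec/sub_finite. Qed.

End Fin.

End MF.
Import MF.

Module ML.
Set Implicit Arguments. Unset Strict Implicit. Unset Printing Implicit Defensive.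
Local Open Scope ring_scope.

Local Open Scope classical_set_scope.

Local Open Scope card_scope.

Lemma pmap_rev (aT rT : Type) (f : aT -> option rT) (s : seq aT) :
  pmap f (rev s) = rev (pmap f s).
Proof.
elim: s => [|x s IH] //=; rewrite rev_cons -cats1 pmap_cat IH /=.
by case: (f x) => [y|] /=; rewrite ?rev_cons ?cats1 ?cats0.
Qed.

Section Proj.
Variables (V W : finType) (e : rel V) (e' : rel W) (p : V -> option W) (i : W -> V).
Hypothesis pi : forall y, p (i y) = Some y.
Hypothesis padj : forall x z, e x z ->
  match p x, p z with Some y, Some y' => is_true (e' y y') | _, _ => True end.

Lemma pmap_i u : pmap p (map i u) = u.
Proof. by elim: u => [|y u IH] //=; rewrite pi /= IH. Qed.

Lemma req_proj u v : raag_eq e u v -> raag_eq e' (pmap p u) (pmap p v).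
Proof.
elim=> {u v} [u|u v _ IH|u v x _ IH1 _ IH2|u x v|u x v y evy].
- exact: req_refl.
- exact: req_sym.
- exact: req_trans IH2.
- rewrite !pmap_cat /=; case: (p v) => [y|] /=; last exact: req_refl.
  exact: req_sq.
- rewrite !pmap_cat /=; have := padj evy.
  case: (p v) => [z|]; case: (p y) => [z'|] //= h; try exact: req_refl.
  exact: req_comm.
Qed.

Lemma sn_proj n : (s_n e' n <= s_n e n)%N.
Proof.
apply: (card_inj_le (sn_specV e' n) (sn_specV e n)
   (psi := fun H : set (seq W) => fun w : seq V => H (pmap p w))).
  move=> H1 H2 _ _ /= eqH; apply/funext => u.
  by have := congr1 (fun F => F (map i u)) eqH; rewrite /= pmap_i.
move=> H [[H0 Hr Hc Hv] [f [fs fi]]]; split.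
  split => /=.
  - exact: H0.
  - by move=> u v /req_proj; apply: Hr.
  - by move=> u v hu hv; rewrite pmap_cat; apply: Hc.
  - by move=> u hu; rewrite pmap_rev; apply: Hv.
exists (fun w => f (pmap p w)); split.
  by move=> k; have [u hu] := fs k; exists (map i u); rewrite pmap_i.
by move=> u v; rewrite fi pmap_cat pmap_rev.
Qed.

End Proj.

Section Join.
Variables (V1 V2 : finType) (e1 : rel V1) (e2 : rel V2).

Lemma sn_join_l n : (s_n e1 n <= s_n (join_rel e1 e2) n)%N.
Proof.
apply: (@sn_proj _ _ _ _ (fun x => if x is inl y then Some y else None) inl) => //.
by case=> [x|x] [z|z].
Qed.

Lemma sn_join_r n : (s_n e2 n <= s_n (join_rel e1 e2) n)%N.
Proof.
apply: (@sn_proj _ _ _ _ (fun x => if x is inr y then Some y else None) inr) => //.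
by case=> [x|x] [z|z].
Qed.
End Join.

End ML.
Import ML.

Module MU1.
Set Implicit Arguments. Unset Strict Implicit. Unset Printing Implicit Defensive.
Local Open Scope ring_scope.

Local Open Scope classical_set_scope.


Section JoinWords.
Variables (V1 V2 : finType) (e1 : rel V1) (e2 : rel V2).
Hypotheses (s1 : symmetric e1) (s2 : symmetric e2).
Local Notation V := (V1 + V2)%type.
Local Notation e := (join_rel e1 e2).
Local Notation req := (raag_eq e).
Local Notation iA := (map (@inl V1 V2)).
Local Notation iB := (map (@inr V1 V2)).

Lemma join_sym : symmetric e.
Proof. by case=> x [y|y] //=; rewrite ?s1 ?s2. Qed.

Lemma req_iA a a' : raag_eq e1 a a' -> req (iA a) (iA a').
Proof.
elim=> {a a'} [u|u v _ IH|u v x _ IH1 _ IH2|u x v|u x v y evy].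
- exact: req_refl.
- exact: req_sym.
- exact: req_trans IH2.
- rewrite !map_cat /=; exact: req_sq.
- rewrite !map_cat /=; exact: req_comm.
Qed.

Lemma req_iB a a' : raag_eq e2 a a' -> req (iB a) (iB a').
Proof.
elim=> {a a'} [u|u v _ IH|u v x _ IH1 _ IH2|u x v|u x v y evy].
- exact: req_refl.
- exact: req_sym.
- exact: req_trans IH2.
- rewrite !map_cat /=; exact: req_sq.
- rewrite !map_cat /=; exact: req_comm.
Qed.

Lemma swap1 y a p q : req (p ++ inr y :: iA a ++ q) (p ++ iA a ++ inr y :: q).
Proof.
elim: a p => [|z a IH] p /=; first exact: req_refl.
apply: req_trans (@req_comm _ e p (iA a ++ q) (inr y) (inl z) isT) _.
have := IH (rcons p (inl z)); by rewrite -!cats1 -!catA.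
Qed.

Lemma swapBA b a : req (iB b ++ iA a) (iA a ++ iB b).
Proof.
elim: b => [|y b IH] /=; first by rewrite cats0; exact: req_refl.
apply: req_trans (req_catl [:: inr y] IH) _ => /=.
have := swap1 y a [::] (iB b); by [].
Qed.

Lemma swapAB b a : req (iA a ++ iB b) (iB b ++ iA a).
Proof. exact/req_sym/swapBA. Qed.

Lemma sepAB (w : seq V) : exists a b, req w (iA a ++ iB b).
Proof.
elim: w => [|[x|y] w [a [b IH]]]; first by exists [::], [::]; exact: req_refl.
  by exists (x :: a), b; exact: (req_catl [:: inl x] IH).
exists a, (y :: b); apply: req_trans (req_catl [:: inr y] IH) _.
have := swap1 y a [::] (iB b); by [].
Qed.

Lemma req_ABAB a b a' b' :
  req (iA a ++ iB b ++ iA a' ++ iB b') (iA (a ++ a') ++ iB (b ++ b')).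
Proof.
rewrite !map_cat -!catA; apply: req_catl; rewrite !catA; apply: req_catr.
exact: swapBA.
Qed.

Lemma rev_AB a b : rev (iA a ++ iB b) = iB (rev b) ++ iA (rev a).
Proof. by rewrite rev_cat !map_rev. Qed.

Lemma req_revAB a b : req (rev (iA a ++ iB b)) (iA (rev a) ++ iB (rev b)).
Proof. rewrite rev_AB; exact: swapBA. Qed.

Lemma req_invAB a b a' b' :
  req (rev (iA a ++ iB b) ++ iA a' ++ iB b') (iA (rev a ++ a') ++ iB (rev b ++ b')).
Proof.
apply: req_trans (req_catr _ (req_revAB a b)) _.
rewrite -catA; exact: req_ABAB.
Qed.

End JoinWords.

End MU1.
Import MU1.

Module MU2.
Set Implicit Arguments. Unset Strict Implicit. Unset Printing Implicit Defensive.
Local Open Scope ring_scope.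

Local Open Scope classical_set_scope.


Definition A1 (V1 V2 : Type) (H : set (seq (V1 + V2))) : set (seq V1) :=
  fun a => H (map inl a).
Definition KB (V1 V2 : Type) (H : set (seq (V1 + V2))) : set (seq V2) :=
  fun b => exists a, H (map inl a ++ map inr b).

Section Index.
Variables (V1 V2 : finType) (e1 : rel V1) (e2 : rel V2).
Hypotheses (s1 : symmetric e1) (s2 : symmetric e2).
Local Notation V := (V1 + V2)%type.
Local Notation e := (join_rel e1 e2).
Local Notation req := (raag_eq e).
Local Notation iA := (map (@inl V1 V2)).
Local Notation iB := (map (@inr V1 V2)).
Variable H : set (seq V).
Hypothesis Hs : is_subgroup e H.

Lemma A1_sub : is_subgroup e1 (A1 H).
Proof.
split; rewrite /A1.
- exact: sg_nil Hs.
- by move=> u v /(@req_iA _ V2 _ e2) h; exact: (sg_req Hs h).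
- by move=> u v hu hv; rewrite map_cat; exact: (sg_cat Hs).
- by move=> u hu; rewrite map_rev; exact: (sg_rev Hs).
Qed.

Lemma KB_sub : is_subgroup e2 (KB H).
Proof.
split; rewrite /KB.
- by exists [::]; exact: sg_nil Hs.
- move=> u v /(@req_iB V1 _ e1) huv [a ha]; exists a; move: ha; apply: (sg_req Hs).
  exact: req_catl.
- move=> u v [a ha] [a' ha']; exists (a ++ a'); have := sg_cat Hs ha ha'.
  by rewrite -catA; apply: (sg_req Hs); exact: req_ABAB.
- move=> u [a ha]; exists (rev a); have := sg_rev Hs ha.
  by apply: (sg_req Hs); exact: req_revAB.
Qed.

Lemma H_cancelB a b : H (iA a ++ iB (rev b ++ b)) <-> H (iA a).
Proof.
rewrite (sg_reqE Hs (v := iA a)) //.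
rewrite map_cat map_rev -{2}[iA a]cats0; apply: req_catl.
by have := req_revK e (iB b) [::]; rewrite cats0.
Qed.

Variable n : nat.
Variable f : seq V -> 'I_n.
Hypothesis fs : idx_spec H f.

Lemma f_req w w' : req w w' -> f w = f w'.
Proof.
move=> h; apply/fs.2; have : H (rev w ++ w ++ [::]).
  apply: (sg_req Hs) (sg_nil Hs); apply: req_sym; exact: req_revK.
by rewrite cats0; apply: (sg_req Hs); apply: req_catl.
Qed.

Lemma f_AB a b a' b' : f (iA a ++ iB b) = f (iA a' ++ iB b') <->
  H (iA (rev a ++ a') ++ iB (rev b ++ b')).
Proof. by rewrite fs.2 (sg_reqE Hs (req_invAB e1 e2 a b a' b')). Qed.

Definition Oset : {set 'I_n} := [set p | `[< exists a, f (iA a) = p >]].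
Definition cls (b : seq V2) : {set 'I_n} :=
  [set p | `[< exists a, f (iA a ++ iB b) = p >]].
Definition Cl : {set {set 'I_n}} := [set X | `[< exists b, cls b = X >]].

Lemma in_cls p b : (p \in cls b) <-> exists a, f (iA a ++ iB b) = p.
Proof. by rewrite inE; split => /asboolP. Qed.

Lemma cls_K b b' : cls b = cls b' <-> KB H (rev b ++ b').
Proof.
split.
  move=> eqc; have : f (iA [::] ++ iB b) \in cls b' by rewrite -eqc; apply/in_cls; exists [::].
  move/in_cls=> [a /esym /f_AB ha]; by exists (rev [::] ++ a).
move=> [a0 ha0].
have gen (c c' : seq V2) a1 : H (iA a1 ++ iB (rev c ++ c')) -> {subset cls c <= cls c'}.
  move=> h1 p /in_cls [a <-]; apply/in_cls; exists (a ++ a1); apply/esym/f_AB.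
  move: h1; apply: (sg_req Hs); apply: req_catr; apply: (@req_iA _ V2 _ e2).
  apply: req_sym; exact: req_revK.
apply/setP => p; apply/idP/idP; first exact: (gen _ _ _ ha0).
apply: (gen _ _ (rev a0)); have := sg_rev Hs ha0.
apply: (sg_req Hs); apply: req_trans (req_revAB e1 e2 a0 _) _; rewrite rev_cat revK; exact: req_refl.
Qed.

Lemma cls_meet p b b' : p \in cls b -> p \in cls b' -> cls b = cls b'.
Proof.
move=> /in_cls [a <-] /in_cls [a' /esym/f_AB h]; apply/cls_K; by exists (rev a ++ a').
Qed.

Lemma cover_cls p : exists b, p \in cls b.
Proof.
have [w <-] := fs.1 p; have [a [b h]] := sepAB e1 e2 w.
by exists b; apply/in_cls; exists a; apply/esym/f_req.
Qed.

Lemma card_cls b : #|cls b| = #|Oset|.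
Proof.
have [repA hrep] : {repA : 'I_n -> seq V1 & forall p, p \in Oset -> f (iA (repA p)) = p}.
  apply: (@choice _ _ (fun p a => p \in Oset -> f (iA a) = p)) => p.
  case: (boolP (p \in Oset)) => hp; last by exists [::].
  by move: hp; rewrite inE => /asboolP [a ha]; exists a.
pose F p := f (iA (repA p) ++ iB b).
have -> : cls b = F @: Oset.
  apply/setP => p; apply/idP/idP.
    move=> /in_cls [a <-]; apply/imsetP; exists (f (iA a)).
      by rewrite inE; apply/asboolP; exists a.
    apply/f_AB/H_cancelB; have := hrep (f (iA a)).
    rewrite inE => /(_ (asboolT (ex_intro _ a erefl))) /esym /fs.2.
    by rewrite map_cat map_rev.
  by move=> /imsetP [q _ ->]; apply/in_cls; exists (repA q).
apply: card_in_imset => p q hp hq /f_AB /H_cancelB hpq.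
rewrite -(hrep p hp) -(hrep q hq); apply/fs.2; by rewrite map_cat map_rev in hpq.
Qed.

Lemma nil_Oset : f (iA [::]) \in Oset.
Proof. by rewrite inE; apply/asboolP; exists [::]. Qed.

Lemma nil_Cl : cls [::] \in Cl.
Proof. by rewrite inE; apply/asboolP; exists [::]. Qed.

Lemma cls_Cl b : cls b \in Cl.
Proof. by rewrite inE; apply/asboolP; exists b. Qed.

Lemma card_n : (#|Oset| * #|Cl| = n)%N.
Proof.
have part : finset.partition Cl [set: 'I_n]%SET.
  apply/and3P; split.
  - apply/eqP/setP => p; rewrite inE; apply/bigcupP.
    by have [b hb] := cover_cls p; exists (cls b) => //; exact: cls_Cl.
  - apply/finset.trivIsetP => X Y hX hY neq; move: hX hY; rewrite !inE => -[b hb] [b' hb']; subst X Y.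
    rewrite disjoint_subset; apply/fintype.subsetP => p hp; rewrite inE; apply/negP => hp'.
    by move/negP: neq; apply; apply/eqP; exact: cls_meet hp hp'.
  - rewrite inE; apply/negP => /asboolP [b h].
    have : #|cls b| = 0%N by rewrite h cards0.
    by rewrite card_cls; apply/eqP; rewrite -lt0n; apply/card_gt0P; exists (f (iA [::])); exact: nil_Oset.
have := card_partition part; rewrite cardsT card_ord => hn.
apply: (etrans _ (esym hn)).
rewrite (eq_bigr (fun _ => #|Oset|)); first by rewrite sum_nat_const mulnC.
by move=> X; rewrite inE => /asboolP [b <-]; exact: card_cls.
Qed.

Lemma A1_index : has_index e1 (A1 H) #|Oset|.
Proof.
exists (fun a => enum_rank_in nil_Oset (f (iA a))); split.
  move=> t; have := enum_valP t; rewrite inE => /asboolP [a ha]; exists a.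
  by rewrite ha enum_valK_in.
move=> u v; split.
  move=> /enum_rank_in_inj h; have /fs.2 : f (iA u) = f (iA v).
    by apply: h; rewrite inE; apply/asboolP; [exists u | exists v].
  by rewrite /A1 map_cat map_rev.
by move=> h; congr enum_rank_in; apply/fs.2; rewrite -map_rev -map_cat.
Qed.

Lemma KB_index : has_index e2 (KB H) #|Cl|.
Proof.
exists (fun b => enum_rank_in nil_Cl (cls b)); split.
  move=> t; have := enum_valP t; rewrite inE => /asboolP [b hb]; exists b.
  by rewrite hb enum_valK_in.
move=> u v; split.
  by move=> /enum_rank_in_inj h; apply/cls_K; apply: h; apply: cls_Cl.
by move=> /cls_K ->.
Qed.

End Index.

End MU2.
Import MU2.

Module MU3.
Set Implicit Arguments. Unset Strict Implicit. Unset Printing Implicit Defensive.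
Local Open Scope ring_scope.

Local Open Scope classical_set_scope.


Section Schreier.
Variables (V1 V2 : finType) (e1 : rel V1) (e2 : rel V2).
Hypotheses (s1 : symmetric e1) (s2 : symmetric e2).
Local Notation V := (V1 + V2)%type.
Local Notation e := (join_rel e1 e2).
Local Notation req := (raag_eq e).
Local Notation iA := (map (@inl V1 V2)).
Local Notation iB := (map (@inr V1 V2)).
Variables H H' : set (seq V).
Hypotheses (Hs : is_subgroup e H) (Hs' : is_subgroup e H').
Hypothesis hA : forall a, H (iA a) <-> H' (iA a).
Variable m : nat.
Variable fK : seq V2 -> 'I_m.
Variable rep : 'I_m -> seq V2.
Hypothesis fKs : idx_spec (KB H) fK.
Hypothesis rep_spec : forall t, fK (rep t) = t.
Hypothesis rep_nil : rep (fK [::]) = [::].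

Definition sch t v := rev (rep (fK (v :: rep t))) ++ v :: rep t.

Hypothesis hsch : forall t v, exists a a',
  [/\ H (iA a ++ iB (sch t v)), H' (iA a' ++ iB (sch t v)) & H (iA (rev a ++ a'))].

Let xb b := rev (rep (fK b)) ++ b.

Lemma reqB b b' : raag_eq e2 b b' -> forall a, H (iA a ++ iB b) -> H (iA a ++ iB b').
Proof. move=> h a; apply: (sg_req Hs); apply: req_catl; exact: (@req_iB V1 _ e1). Qed.

Lemma reqB' b b' : raag_eq e2 b b' -> forall a, H' (iA a ++ iB b) -> H' (iA a ++ iB b').
Proof. move=> h a; apply: (sg_req Hs'); apply: req_catl; exact: (@req_iB V1 _ e1). Qed.

Lemma reqA' a a' : raag_eq e1 a a' -> forall b, H' (iA a ++ iB b) -> H' (iA a' ++ iB b).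
Proof. move=> h b; apply: (sg_req Hs'); apply: req_catr; exact: (@req_iA _ V2 _ e2). Qed.

Lemma xb_step v b : raag_eq e2 (sch (fK b) v ++ xb b) (xb (v :: b)).
Proof.
rewrite /sch /xb.
have -> : fK (v :: rep (fK b)) = fK (v :: b).
  apply: (idx_cons (KB_sub Hs) fKs); exact: rep_spec.
rewrite -catA /= -[_ :: _ ++ _]cat1s -[v :: b]cat1s !catA.
rewrite -!catA; apply: req_catl; apply: req_catl; exact: req_Krev.
Qed.

Lemma claim b : forall a, H (iA a ++ iB (xb b)) -> H' (iA a ++ iB (xb b)).
Proof.
elim: b => [|v b IH] a.
  by rewrite /xb rep_nil /= !cats0 => /hA.
move=> h.
have {}h : H (iA a ++ iB (sch (fK b) v ++ xb b)).
  by move: h; apply: reqB; apply: req_sym; exact: xb_step.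
apply: (reqB' (xb_step v b)).
have [a1 [a1' [h1 h1' h11]]] := hsch (fK b) v.
set s := sch (fK b) v in h h1 h1' *.
have h2 : H (iA (rev a1 ++ a) ++ iB (xb b)).
  have := sg_cat Hs (sg_rev Hs h1) h.
  apply: (sg_req Hs); apply: req_trans (req_invAB e1 e2 _ _ _ _) _.
  apply: req_catl; apply: (@req_iB V1 _ e1); rewrite catA.
  have := req_revK e2 s (xb b); by rewrite catA.
have {}h2 := IH _ h2.
have h3 : H' (iA (rev a1' ++ a1)).
  have := sg_rev Hs h11; rewrite -map_rev rev_cat revK => /hA //.
have := sg_cat Hs' h1' (sg_cat Hs' h3 h2).
rewrite -!catA [iA (rev a1' ++ a1) ++ _]catA -map_cat => h4.
have h5 := sg_req Hs' (req_ABAB e1 e2 _ _ _ _) h4.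
have h6 : H' (iA a ++ iB (s ++ xb b)).
  move: h5; apply: reqA'; rewrite -!catA.
  apply: req_trans (req_Krev e1 a1' _) _; exact: req_Krev.
by move: h6; rewrite /s /sch -catA.
Qed.

Lemma determined w : H w -> H' w.
Proof.
move=> hw; have [a [b hab]] := sepAB e1 e2 w.
have hH := sg_req Hs hab hw.
have Kb : KB H b by exists a.
have eb : fK b = fK [::] by apply/esym; apply/(idx_nil fKs).
have : H (iA a ++ iB (xb b)) by rewrite /xb eb rep_nil.
move/claim; rewrite /xb eb rep_nil /= => h'.
exact: (sg_req Hs' (req_sym hab) h').
Qed.

End Schreier.

End MU3.
Import MU3.

Module MU4.
Set Implicit Arguments. Unset Strict Implicit. Unset Printing Implicit Defensive.
Local Open Scope ring_scope.

Local Open Scope classical_set_scope.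

Local Open Scope card_scope.

Definition idxf (V : Type) (H : set (seq V)) (m : nat) : seq V -> 'I_m.+1 :=
  match pselect (exists f : seq V -> 'I_m.+1, idx_spec H f) with
  | left P => proj1_sig (cid P) | right _ => fun _ => ord0 end.

Lemma idxfP (V : Type) (H : set (seq V)) m :
  (exists f : seq V -> 'I_m.+1, idx_spec H f) -> idx_spec H (idxf H m).
Proof. by rewrite /idxf; case: pselect => // P _; exact: (proj2_sig (cid P)). Qed.

Definition repf (V : Type) (H : set (seq V)) (m : nat) (t : 'I_m.+1) : seq V :=
  if t == idxf H m [::] then [::] else
  match pselect (exists u, idxf H m u = t) with
  | left P => proj1_sig (cid P) | right _ => [::] end.
Arguments repf {V} H m t.

Lemma repf_nil (V : Type) (H : set (seq V)) m : repf H m (idxf H m [::]) = [::].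
Proof. by rewrite /repf eqxx. Qed.

Lemma repf_spec (V : Type) (H : set (seq V)) m : idx_spec H (idxf H m) ->
  forall t, idxf H m (repf H m t) = t.
Proof.
move=> [sur _] t; rewrite /repf; case: eqP => [->//|_].
case: pselect => [P|]; first exact: (proj2_sig (cid P)).
by move=> nP; exfalso; apply: nP; exact: sur.
Qed.

Lemma card_enc (T : Type) (S : set T) m : S #= `I_m ->
  exists phi : T -> nat, {in S &, injective phi} /\ (forall x, S x -> phi x < m)%N.
Proof.
move/pcard_eqP; rewrite bijPex => -[phi [hf hi _]].
by exists phi; split => // x Sx; exact: hf.
Qed.

Section Count.
Variables (V1 V2 : finType) (e1 : rel V1) (e2 : rel V2).
Hypotheses (s1 : symmetric e1) (s2 : symmetric e2).
Local Notation V := (V1 + V2)%type.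
Local Notation e := (join_rel e1 e2).
Local Notation iA := (map (@inl V1 V2)).
Local Notation iB := (map (@inr V1 V2)).
Variable n : nat.

Definition sA (ik : 'I_n * 'I_n) : nat :=
  if (ik.1.+1 * ik.2.+1 == n)%N then s_n e1 ik.1.+1 else 0%N.
Definition sB (ik : 'I_n * 'I_n) : nat :=
  if (ik.1.+1 * ik.2.+1 == n)%N then s_n e2 ik.2.+1 else 0%N.
Definition TT (ik : 'I_n * 'I_n) : finType :=
  ('I_(sA ik) * 'I_(sB ik) * {ffun 'I_(ik.2.+1) * V2 -> 'I_(ik.1.+1)})%type.

Lemma sn_join_le :
  (s_n e n <= \sum_(ik : 'I_n * 'I_n) sA ik * sB ik * ik.1.+1 ^ (ik.2.+1 * #|V2|))%N.
Proof.
have [phiA hphiA] := @choice nat (set (seq V1) -> nat) (fun i phi =>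
    {in subgroups_of_index e1 i &, injective phi} /\
    (forall x, subgroups_of_index e1 i x -> phi x < s_n e1 i)%N)
    (fun i => card_enc (sn_specV e1 i)).
have [phiB hphiB] := @choice nat (set (seq V2) -> nat) (fun i phi =>
    {in subgroups_of_index e2 i &, injective phi} /\
    (forall x, subgroups_of_index e2 i x -> phi x < s_n e2 i)%N)
    (fun i => card_enc (sn_specV e2 i)).
pose U := {ik : 'I_n * 'I_n & TT ik}.
pose P (H : set (seq V)) (d : U) :=
  let ik := tag d in
  [/\ subgroups_of_index e1 ik.1.+1 (A1 H), subgroups_of_index e2 ik.2.+1 (KB H),
      nat_of_ord (tagged d).1.1 = phiA ik.1.+1 (A1 H),
      nat_of_ord (tagged d).1.2 = phiB ik.2.+1 (KB H) &
      forall t v, exists a, H (iA a ++ iB (sch (idxf (KB H) ik.2) (repf (KB H) ik.2) t v))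
                  /\ idxf (A1 H) ik.1 a = (tagged d).2 (t, v)].
have hex : forall H, subgroups_of_index e n H -> exists d, P H d.
  move=> H [Hs [f fs]].
  have hn := card_n Hs fs.
  have hi0 : (0 < #|Oset f|)%N by apply/card_gt0P; exists (f (iA [::])); exact: nil_Oset.
  have hk0 : (0 < #|Cl f|)%N by apply/card_gt0P; exists (cls f [::]); exact: nil_Cl.
  have hiA : subgroups_of_index e1 #|Oset f| (A1 H) by split; [exact: (A1_sub Hs) | exact: (A1_index e1 fs)].
  have hiK : subgroups_of_index e2 #|Cl f| (KB H) by split; [exact: (KB_sub Hs) | exact: (KB_index Hs fs)].
  move: hn hi0 hk0 hiA hiK; case: #|Oset f| => [//|i']; case: #|Cl f| => [//|k'] hn _ _ hiA hiK.
  have hi : (i' < n)%N by rewrite -hn; nia.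
  have hk : (k' < n)%N by rewrite -hn; nia.
  pose ik : 'I_n * 'I_n := (Ordinal hi, Ordinal hk).
  have fKs : idx_spec (KB H) (idxf (KB H) k') by apply: idxfP; case: hiK.
  have fAs : idx_spec (A1 H) (idxf (A1 H) i') by apply: idxfP; case: hiA.
  have [ga hga] := @choice ('I_k'.+1 * V2)%type (seq V1) (fun tv a =>
     H (iA a ++ iB (sch (idxf (KB H) k') (repf (KB H) k') tv.1 tv.2))) (fun tv =>
     (fKs.2 (repf (KB H) k' (idxf (KB H) k' (tv.2 :: repf (KB H) k' tv.1)))
             (tv.2 :: repf (KB H) k' tv.1)).1 (repf_spec fKs _)).
  pose g : {ffun 'I_k'.+1 * V2 -> 'I_i'.+1} := [ffun tv => idxf (A1 H) i' (ga tv)].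
  have pA : (phiA i'.+1 (A1 H) < sA ik)%N.
    by rewrite /sA /= hn eqxx; exact: (hphiA _).2 _ hiA.
  have pB : (phiB k'.+1 (KB H) < sB ik)%N.
    by rewrite /sB /= hn eqxx; exact: (hphiB _).2 _ hiK.
  exists (existT _ ik ((Ordinal pA, Ordinal pB), g) : U); split => //=.
  by move=> t v; exists (ga (t, v)); split; [exact: (hga (t, v)) | rewrite /g ffunE].
have huniq : forall H H' d, subgroups_of_index e n H -> subgroups_of_index e n H' ->
    P H d -> P H' d -> H = H'.
  move=> H H' [ik [[a b] g]] [Hs _] [Hs' _] [hA1 hK1 ea1 eb1 hg1] [hA2 hK2 ea2 eb2 hg2].
  simpl in *.
  have eA : A1 H = A1 H'.
    by apply: (hphiA ik.1.+1).1; rewrite ?in_setE // -ea1 -ea2.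
  have eK : KB H = KB H'.
    by apply: (hphiB ik.2.+1).1; rewrite ?in_setE // -eb1 -eb2.
  have dir : forall H1 H2, is_subgroup e H1 -> is_subgroup e H2 -> A1 H1 = A1 H2 -> KB H1 = KB H2 ->
      subgroups_of_index e1 ik.1.+1 (A1 H1) -> subgroups_of_index e2 ik.2.+1 (KB H1) ->
      (forall t v, exists a, H1 (iA a ++ iB (sch (idxf (KB H1) ik.2) (repf (KB H1) ik.2) t v))
                  /\ idxf (A1 H1) ik.1 a = g (t, v)) ->
      (forall t v, exists a, H2 (iA a ++ iB (sch (idxf (KB H2) ik.2) (repf (KB H2) ik.2) t v))
                  /\ idxf (A1 H2) ik.1 a = g (t, v)) ->
      forall w, H1 w -> H2 w.
    move=> H1 H2 hs1 hs2 eA' eK' [_ hiA] [_ hiK] g1 g2.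
    have fKs : idx_spec (KB H1) (idxf (KB H1) ik.2) by apply: idxfP; exact: hiK.
    have fAs : idx_spec (A1 H1) (idxf (A1 H1) ik.1) by apply: idxfP; exact: hiA.
    apply: (determined hs1 hs2 _ fKs (repf_spec fKs) (repf_nil _ _)).
      by move=> a'; have := congr1 (fun X => X a') eA'; rewrite /A1 => ->.
    move=> t v; have [a1 [ha1 ga1]] := g1 t v; have [a2 [ha2 ga2]] := g2 t v.
    rewrite -eK' -eA' in ha2 ga2.
    exists a1, a2; split => //; apply/(fAs.2 _ _); by rewrite ga1 ga2.
  apply/funext => w; apply/propext; split.
    exact: (dir H H' Hs Hs' eA eK hA1 hK1 hg1 hg2).
  exact: (dir H' H Hs' Hs (esym eA) (esym eK) hA2 hK2 hg2 hg1).
have [m [hm hmU]] := card_data hex huniq.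
have -> : s_n e n = m.
  by apply/card_eq_II; exact: card_eq_trans (card_esym (sn_specV e n)) hm.
apply: (leq_trans hmU); rewrite card_tagged sumnE big_map big_enum /=.
apply: leq_sum => ik _; rewrite /TT !card_prod card_ffun !card_ord card_prod card_ord.
by [].
Qed.

End Count.

End MU4.
Import MU4.

Module MA.
Set Implicit Arguments. Unset Strict Implicit. Unset Printing Implicit Defensive.
Local Open Scope ring_scope.

Local Open Scope classical_set_scope.


Section Asym.
Variable R : realType.

Definition rr (a : nat -> nat) (n : nat) : R := ln ((a n)%:R : R) / (n%:R * ln (n%:R : R)).

Lemma ev_of (f : nat -> R) (l : R) : f @ \oo --> l -> forall eps, 0 < eps ->
  exists N, forall n, (N <= n)%N -> l - eps <= f n <= l + eps.
Proof.
move/cvgrPdist_le => h eps he; have [N _ hN] := h eps he.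
by exists N => n hn; rewrite -ler_distlC; exact: hN n hn.
Qed.

Lemma ln_nat_ge0 m : 0 <= ln (m%:R : R).
Proof.
case: m => [|m]; first by rewrite ln0.
by apply: ln_ge0; rewrite ler1n.
Qed.

Lemma ln_le_nat (x y : nat) : (x <= y)%N -> ln (x%:R : R) <= ln y%:R.
Proof.
case: x => [|x] hxy; first by rewrite ln0 // ln_nat_ge0.
have hy : (0 < y)%N by apply: leq_trans hxy.
by rewrite ler_ln ?posrE ?ltr0n ?ler_nat.
Qed.

Lemma ln_lt_nat (x : nat) : ln (x%:R : R) <= x%:R.
Proof.
case: x => [|x]; first by rewrite ln0.
by apply/ltW/ln_sublinear; rewrite ltr0n.
Qed.

Lemma nlnn_ge0 m : 0 <= m%:R * ln (m%:R : R).
Proof. by apply: mulr_ge0 => //; exact: ln_nat_ge0. Qed.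

Lemma nlnn_gt0 m : (2 <= m)%N -> 0 < m%:R * ln (m%:R : R).
Proof.
move=> hm; apply: mulr_gt0; first by rewrite ltr0n; case: m hm.
by apply: ln_gt0; rewrite ltr1n.
Qed.

Lemma eventual_bound (a : nat -> nat) (b k : R) : rr a @ \oo --> b -> b < k -> 0 <= k ->
  exists C : R, 1 <= C /\ forall m, (0 < m)%N -> (a m)%:R <= C * expR (k * (m%:R * ln (m%:R : R))).
Proof.
move=> ha hbk hk0.
have hkb : 0 < k - b by rewrite subr_gt0.
have [N hN] := ev_of ha hkb.
exists (1 + \sum_(m < N.+2) (a m)%:R); split.
  by rewrite lerDl sumr_ge0.
move=> m hm.
have hC : 1 + \sum_(m < N.+2) (a m)%:R <= (1 + \sum_(m < N.+2) (a m)%:R) * expR (k * (m%:R * ln m%:R)).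
  rewrite -{1}[_ + _]mulr1; apply: ler_wpM2l; first by rewrite addr_ge0 ?sumr_ge0.
  by apply: le_trans (expR_ge1Dx _); rewrite lerDl mulr_ge0 // nlnn_ge0.
case: (ltnP m N.+2) => hmN.
  apply: (le_trans _ hC); rewrite (bigD1 (Ordinal hmN)) //=.
  have h0 : 0 <= \sum_(i < N.+2 | i != Ordinal hmN) (a i)%:R :> R by rewrite sumr_ge0.
  lra.
have hm2 : (2 <= m)%N by apply: leq_trans hmN.
have /andP [_ hr] := hN m (leq_trans (leqnSn _) (ltnW hmN)).
rewrite subrKC in hr.
have hpos := nlnn_gt0 hm2.
case Eam : (a m) => [|am]; first by apply: mulr_ge0; [rewrite addr_ge0 ?sumr_ge0 | exact: expR_ge0].
rewrite -[X in X <= _]lnK ?posrE ?ltr0n //.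
have : ln (am.+1%:R : R) <= k * (m%:R * ln m%:R).
  by move: hr; rewrite /rr Eam ler_pdivrMr.
rewrite -ler_expR => h; apply: le_trans h _.
rewrite -{1}[expR _]mul1r; apply: ler_wpM2r; first exact: expR_ge0.
by rewrite lerDl sumr_ge0.
Qed.


Lemma term_bound (a b : nat -> nat) (CA CB k : R) (d i j n : nat) :
  0 <= k -> 1 <= CA -> 1 <= CB ->
  (forall m, (0 < m)%N -> (a m)%:R <= CA * expR (k * (m%:R * ln (m%:R : R)))) ->
  (forall m, (0 < m)%N -> (b m)%:R <= CB * expR (k * (m%:R * ln (m%:R : R)))) ->
  (0 < i)%N -> (0 < j)%N -> (i * j = n)%N ->
  ((a i * b j * i ^ (j * d))%N)%:R <=
    CA * CB * expR (k * ((n.+1)%:R * ln (n%:R : R)) + (d * n)%:R).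
Proof.
move=> hk hCA hCB ha hb hi hj hn.
rewrite !natrM natrX.
have ei : (i%:R : R) = expR (ln i%:R) by rewrite lnK // posrE ltr0n.
have e3 : (i%:R : R) ^+ (j * d) = expR ((j * d)%:R * ln i%:R) by rewrite expRM_natl -ei.
rewrite e3.
have h1 := ha i hi; have h2 := hb j hj.
apply: (le_trans (y := CA * expR (k * (i%:R * ln i%:R)) * (CB * expR (k * (j%:R * ln j%:R)))
                       * expR ((j * d)%:R * ln i%:R))).
  apply: ler_wpM2r; first exact: expR_ge0.
  by apply: ler_pM => //; rewrite ler0n.
have -> : CA * expR (k * (i%:R * ln i%:R)) * (CB * expR (k * (j%:R * ln j%:R)))
             * expR ((j * d)%:R * ln (i%:R : R)) =
          CA * CB * expR (k * (i%:R * ln i%:R) + k * (j%:R * ln j%:R) + (j * d)%:R * ln i%:R).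
  by rewrite !expRD; ring.
apply: ler_wpM2l; first by apply: mulr_ge0; lra.
rewrite ler_expR.
have hin : (i <= n)%N by rewrite -hn leq_pmulr.
have hjn : (j <= n)%N by rewrite -hn leq_pmull.
have li := ln_le_nat hin; have lj := ln_le_nat hjn.
have li0 := ln_nat_ge0 i; have lj0 := ln_nat_ge0 j; have ln0 := ln_nat_ge0 n.
have lii := ln_lt_nat i.
have hij : (i + j <= n.+1)%N by rewrite -hn; nia.
have hijR : (i%:R + j%:R : R) <= n.+1%:R by rewrite -natrD ler_nat.
have hnR : (i%:R * j%:R : R) = n%:R by rewrite -natrM hn.
have A : i%:R * ln (i%:R : R) <= i%:R * ln (n%:R : R) by apply: ler_wpM2l.
have B : j%:R * ln (j%:R : R) <= j%:R * ln (n%:R : R) by apply: ler_wpM2l.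
have C : (i%:R + j%:R) * ln (n%:R : R) <= n.+1%:R * ln (n%:R : R) by apply: ler_wpM2r.
have D : j%:R * ln (i%:R : R) <= j%:R * i%:R by apply: ler_wpM2l.
have E : k * (i%:R * ln i%:R + j%:R * ln j%:R) <= k * (n.+1%:R * ln (n%:R : R)).
  apply: ler_wpM2l => //; lra.
have F : (d%:R : R) * (j%:R * ln (i%:R : R)) <= d%:R * (j%:R * i%:R) by apply: ler_wpM2l.
rewrite natrM.
have e1 : (j%:R * d%:R * ln (i%:R : R)) = d%:R * (j%:R * ln i%:R) by ring.
have e2 : (d%:R * n%:R : R) = d%:R * (j%:R * i%:R) by rewrite -hnR; ring.
rewrite e1 e2.
lra.
Qed.


Lemma lnM' (x y : R) : 0 < x -> 0 < y -> ln (x * y) = ln x + ln y.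
Proof. by move=> hx hy; apply: lnM; rewrite posrE. Qed.

Lemma near_ge (r : R) : exists N, forall n, (N <= n)%N -> r <= n%:R.
Proof. have [N _ hN] := nbhs_infty_ger r; by exists N => n hn; exact: hN. Qed.

Lemma near_ln_ge (r : R) : exists N, forall n, (N <= n)%N -> r <= ln (n%:R : R).
Proof.
have [N hN] := near_ge (expR r); exists N => n hn.
have h := hN n hn; have hp : 0 < (n%:R : R) by apply: lt_le_trans h; exact: expR_gt0.
by rewrite -ler_expR lnK ?posrE.
Qed.

Lemma asym (a b c : nat -> nat) (d : nat) (b1 b2 : R) : 0 < b1 -> 0 < b2 ->
  rr a @ \oo --> b1 -> rr b @ \oo --> b2 ->
  (forall n, (a n <= c n)%N) -> (forall n, (b n <= c n)%N) ->
  (forall n, (0 < n)%N -> (c n)%:R <= \sum_(ik : 'I_n * 'I_n)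
       (if (ik.1.+1 * ik.2.+1 == n)%N
        then ((a ik.1.+1 * b ik.2.+1 * ik.1.+1 ^ (ik.2.+1 * d))%N)%:R else 0 : R)) ->
  rr c @ \oo --> Num.max b1 b2.
Proof.
move=> hb1 hb2 ha hb hac hbc hsum.
apply/cvgrPdist_le => eps he.
set be := Num.max b1 b2.
have hbe1 : b1 <= be by rewrite le_max lexx.
have hbe2 : b2 <= be by rewrite le_max lexx orbT.
pose k := be + eps / 2.
have hk0 : 0 <= k by rewrite /k; lra.
have [CA [hCA haC]] := eventual_bound ha (k := k) ltac:(rewrite /k; lra) hk0.
have [CB [hCB hbC]] := eventual_bound hb (k := k) ltac:(rewrite /k; lra) hk0.
pose L := ln (CA * CB).
have hL : 0 <= L by apply: ln_ge0; rewrite -[1]mulr1; apply: ler_pM => //; lra.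
have [Na hNa] := ev_of ha he.
have [Nb hNb] := ev_of hb he.
have [N1 hN1] := near_ge (8 * (2 + k) / eps).
have [N2 hN2] := near_ge (8 * L / eps).
have [N3 hN3] := near_ln_ge (Num.max 1 (8 * d%:R / eps)).
exists (maxn 2 (maxn (maxn Na Nb) (maxn N1 (maxn N2 N3)))) => // n.
rewrite /= !geq_max => /and3P [hn2 /andP [hna hnb] /and3P [hn1 hn2' hn3]].
have hpos := nlnn_gt0 hn2.
have hn0 : (0 < n)%N by apply: leq_trans hn2.
rewrite ler_distlC; apply/andP; split.
  have mono (x : nat -> nat) : (forall n, (x n <= c n)%N) -> rr x n <= rr c n.
    by move=> hx; rewrite /rr ler_pM2r ?invr_gt0 // ln_le_nat.
  have /andP [l1 _] := hNa n hna; have /andP [l2 _] := hNb n hnb.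
  have := mono _ hac; have := mono _ hbc.
  rewrite /be; case: (leP b1 b2) => _; lra.
have lnn1 : 1 <= ln (n%:R : R) by apply: le_trans (hN3 n hn3); rewrite le_max lexx.
have lnnd : 8 * d%:R / eps <= ln (n%:R : R) by apply: le_trans (hN3 n hn3); rewrite le_max lexx orbT.
have hM : (c n)%:R <= (n * n)%:R * (CA * CB * expR (k * ((n.+1)%:R * ln (n%:R : R)) + (d * n)%:R)).
  apply: le_trans (hsum n hn0) _.
  apply: (le_trans (y := \sum_(ik : 'I_n * 'I_n)
      (CA * CB * expR (k * ((n.+1)%:R * ln (n%:R : R)) + (d * n)%:R)))).
    apply: ler_sum => ik _; case: ifP => [/eqP h|_].
      by apply: term_bound haC hbC _ _ h.
    by apply: mulr_ge0; [apply: mulr_ge0; lra | exact: expR_ge0].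
  rewrite sumr_const card_prod card_ord; rewrite (mulr_natl (CA * CB * _)); exact: lexx.
case Ec : (c n) => [|cn].
  rewrite /rr Ec ln0 // mul0r; lra.
have hcpos : 0 < ((c n)%:R : R) by rewrite Ec ltr0n.
have hMpos : 0 < (n * n)%:R * (CA * CB * expR (k * ((n.+1)%:R * ln (n%:R : R)) + (d * n)%:R)) :> R.
  by apply: lt_le_trans hM.
have hln : ln ((c n)%:R : R) <= 2 * ln (n%:R : R) + L + (k * ((n.+1)%:R * ln (n%:R : R)) + (d * n)%:R).
  rewrite -ler_ln ?posrE // in hM.
  apply: le_trans hM _.
  have hnn : 0 < ((n * n)%:R : R) by rewrite ltr0n muln_gt0 hn0.
  have hCC : 0 < CA * CB by apply: mulr_gt0; lra.
  rewrite lnM' //; last exact: mulr_gt0 hCC (expR_gt0 _).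
  rewrite lnM' ?expR_gt0 // expRK natrM lnM' ?ltr0n // -/L; lra.
rewrite /rr ler_pdivrMr //.
apply: le_trans hln _.
have hn1R := hN1 n hn1; have hn2R := hN2 n hn2'.
set l := ln (n%:R : R) in lnn1 lnnd hn1R hn2R hpos *.
set N := (n%:R : R) in hn1R hn2R hpos *.
have P1 : 2 + k <= eps / 8 * N.
  by move: hn1R; rewrite ler_pdivrMr // => h; lra.
have P2 : L <= eps / 8 * N.
  by move: hn2R; rewrite ler_pdivrMr // => h; lra.
have P3 : d%:R <= eps / 8 * l.
  by move: lnnd; rewrite ler_pdivrMr // => h; lra.
have Q1 : (2 + k) * l <= eps / 8 * N * l by apply: ler_wpM2r => //; lra.
have Q2 : L <= eps / 8 * N * l.
  apply: le_trans P2 _; rewrite -{1}[eps / 8 * N]mulr1; apply: ler_wpM2l => //.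
  by apply: mulr_ge0; [lra | rewrite /N ler0n].
have Q3 : d%:R * N <= eps / 8 * l * N by apply: ler_wpM2r => //; rewrite /N ler0n.
rewrite natrM -/N -natr1 -/N.
have -> : be + eps = k + eps / 2 by rewrite /k; lra.
nra.
Qed.

End Asym.

End MA.
Import MA.

Module MG.
Set Implicit Arguments. Unset Strict Implicit. Unset Printing Implicit Defensive.
Local Open Scope ring_scope.

Local Close Scope classical_set_scope.


Lemma connect_img (T T' : finType) (r : rel T) (r' : rel T') (f : T -> T') :
  (forall x y, r x y -> r' (f x) (f y)) ->
  forall x y, connect r x y -> connect r' (f x) (f y).
Proof.
move=> h x y /connectP [p hp ->]; elim: p x hp => [|z p IH] x /=; first by move=> _; exact: connect0.
case/andP => hxz hp; apply: connect_trans (connect1 (h _ _ hxz)) (IH _ hp).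
Qed.

Lemma connect_pre (T T' : finType) (r : rel T) (r' : rel T') (f : T -> T') :
  (forall x z, r' (f x) z -> exists2 y, z = f y & r x y) ->
  forall x z, connect r' (f x) z -> exists2 y, z = f y & connect r x y.
Proof.
move=> h x z /connectP [p hp ->]; elim: p x hp => [|w p IH] x /=.
  by move=> _; exists x => //; exact: connect0.
case/andP => /h [y -> hxy] hp; have [y' -> hc] := IH _ hp.
by exists y' => //; apply: connect_trans (connect1 hxy) hc.
Qed.

Section Embed.
Variables (W V : finType) (e' : rel W) (e : rel V) (f : W -> V).
Hypothesis finj : injective f.
Hypothesis fe : forall x y, e (f x) (f y) = e' x y.
Variable S1 : {set W}.
Local Notation S := (f @: S1).

Lemma memS x : (f x \in S) = (x \in S1).
Proof. exact: mem_imset. Qed.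

Lemma ind_img x y : induced_rel e S (f x) (f y) = induced_rel e' S1 x y.
Proof. by rewrite /induced_rel !memS fe. Qed.

Lemma comp_img x : component e S (f x) = f @: component e' S1 x.
Proof.
apply/setP => z; apply/idP/idP.
  rewrite inE => /andP [zS hc].
  have [y ez hxy] : exists2 y, z = f y & connect (induced_rel e' S1) x y.
    apply: (connect_pre _ hc) => u w /and3P [uS wS euw].
    case/imsetP: wS => y yS ew; subst w; exists y => //.
    by rewrite -ind_img /induced_rel uS euw andbT; apply/imsetP; exists y.
  subst z; move: zS; rewrite memS => yS; apply/imsetP; exists y => //.
  by rewrite inE yS.
case/imsetP => y; rewrite inE => /andP [yS hc] ->.
rewrite inE memS yS /=.
by apply: (connect_img _ hc) => u w; rewrite ind_img.
Qed.

Lemma comps_img : components e S = (fun C : {set W} => f @: C) @: components e' S1.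
Proof.
rewrite /components -!imset_comp; apply: eq_imset => x /=; exact: comp_img.
Qed.

Lemma weight_img (R : realType) : weight R e S = weight R e' S1.
Proof.
rewrite /weight comps_img big_imset /=; last by move=> A B _ _; apply: imset_inj.
by apply: eq_bigr => C _; rewrite card_imset.
Qed.

Lemma cc_img : clique_collection e S = clique_collection e' S1.
Proof.
rewrite /clique_collection comps_img; apply/forallP/forallP.
  move=> h C; apply/implyP => hC; apply/forallP => x; apply/implyP => xC.
  apply/forallP => y; apply/implyP => yC.
  have := h (f @: C); rewrite (mem_imset _ _ (imset_inj finj)) hC /= => /forallP /(_ (f x)).
  rewrite mem_imset // xC /= => /forallP /(_ (f y)); rewrite mem_imset // yC /=.
  by rewrite (inj_eq finj) fe.
move=> h C; apply/implyP => /imsetP [C1 hC1 ->]; apply/forallP => x; apply/implyP.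
case/imsetP => x1 x1C ->; apply/forallP => y; apply/implyP; case/imsetP => y1 y1C ->.
have := h C1; rewrite hC1 /= => /forallP /(_ x1); rewrite x1C /= => /forallP /(_ y1).
by rewrite y1C /= (inj_eq finj) fe.
Qed.

End Embed.

Section Gam.
Variable R : realType.

Lemma gamma_ge_cc (V : finType) (e : rel V) (S : {set V}) :
  clique_collection e S -> weight R e S <= gamma R e.
Proof. by move=> h; rewrite /gamma; apply: (le_bigmax_cond _ (P := clique_collection e)). Qed.

Lemma gamma_le (V : finType) (e : rel V) (x : R) : 0 <= x ->
  (forall S, clique_collection e S -> weight R e S <= x) -> gamma R e <= x.
Proof. by move=> h0 h; rewrite /gamma; apply: bigmax_le. Qed.

Lemma gamma_ge0 (V : finType) (e : rel V) : 0 <= gamma R e.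
Proof.
have h : clique_collection e (finset.set0 : {set V}).
  by apply/forallP => C; apply/implyP; rewrite /components imset0 inE.
have := gamma_ge_cc h; by rewrite /weight /components imset0 big_set0.
Qed.

Lemma noncomplete_ge1 (V : finType) (e : rel V) : symmetric e -> irreflexive e ->
  ~ complete_graph e -> 1 <= gamma R e.
Proof.
move=> es ei nc.
have [x [y [nxy nexy]]] : exists x y, x != y /\ ~~ e x y.
  case: (pselect (exists x y, x != y /\ ~~ e x y)) => // h; exfalso; apply: nc => x y nxy.
  by apply/negPn/negP => ne; apply: h; exists x, y.
pose S := [set x; y].
have single u : u \in S -> component e S u = [set u].
  move=> uS; apply/setP => z; rewrite !inE; apply/andP/eqP => [[zS /connectP [p hp ->]]|->].
    case: p hp => [//|w p] /= /andP [/and3P [_ wS euw] _]; exfalso.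
    move: uS wS euw; rewrite !inE => /orP [] /eqP -> /orP [] /eqP ->;
      by rewrite ?ei // ?(negbTE nexy) // es (negbTE nexy).
  by split; [move: uS; rewrite !inE | exact: connect0].
have hc : components e S = [set [set x]; [set y]].
  by rewrite /components imsetU1 imset_set1 !single // !inE eqxx ?orbT.
have ccS : clique_collection e S.
  rewrite /clique_collection hc; apply/forallP => C; apply/implyP; rewrite !inE.
  by case/orP => /eqP -> ; apply/forallP => u; apply/implyP; rewrite inE => /eqP ->;
     apply/forallP => v; apply/implyP; rewrite inE => /eqP ->; rewrite eqxx.
have := gamma_ge_cc ccS; rewrite /weight hc big_setU1 /=; last first.
  by rewrite inE; apply/negP => /eqP /setP /(_ x); rewrite !inE eqxx (negbTE nxy).
rewrite big_set1 !cards1 => h; apply: le_trans h; rewrite expr1; lra.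
Qed.

Variables (V1 V2 : finType) (e1 : rel V1) (e2 : rel V2).
Local Notation V := (V1 + V2)%type.
Local Notation e := (join_rel e1 e2).

Lemma comps_mixed (S : {set V}) a b : inl a \in S -> inr b \in S -> components e S = [set S].
Proof.
move=> ha hb.
have ind x y : x \in S -> y \in S -> e x y -> connect (induced_rel e S) x y.
  by move=> xS yS exy; apply: connect1; rewrite /induced_rel xS yS.
have hcomp v : v \in S -> component e S v = S.
  move=> vS; apply/setP => w; rewrite inE; apply/andP/idP => [[]//|wS]; split => //.
  case: v vS => [v|v] vS; case: w wS => [w|w] wS; try exact: ind.
    by apply: connect_trans (ind _ _ vS hb isT) (ind _ _ hb wS isT).
  by apply: connect_trans (ind _ _ vS ha isT) (ind _ _ ha wS isT).
apply/setP => C; rewrite inE; apply/imsetP/eqP => [[v vS ->]|->]; first exact: hcomp.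
by exists (inl a) => //; rewrite hcomp.
Qed.

Lemma weight_mixed (S : {set V}) a b : inl a \in S -> inr b \in S -> weight R e S <= 1.
Proof.
move=> ha hb; rewrite /weight (comps_mixed ha hb) big_set1.
have : 0 <= (2%:R : R) ^- #|S| by rewrite invr_ge0 exprn_ge0.
lra.
Qed.

Hypotheses (g1 : simple_graph e1) (g2 : simple_graph e2).

Lemma gamma_join : ~ complete_graph e1 \/ ~ complete_graph e2 ->
  gamma R e = Num.max (gamma R e1) (gamma R e2).
Proof.
move=> nc; case: g1 => s1 i1; case: g2 => s2 i2.
have fe1 : forall x y, e (inl x) (inl y) = e1 x y by [].
have fe2 : forall x y, e (inr x) (inr y) = e2 x y by [].
have inl_inj : injective (@inl V1 V2) by move=> x y [].
have inr_inj : injective (@inr V1 V2) by move=> x y [].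
apply/eqP; rewrite eq_le; apply/andP; split.
  apply: gamma_le; first by rewrite le_max gamma_ge0.
  move=> S ccS.
  case: (boolP [exists b, inr b \in S]) => [/existsP [b hb]|nb].
    case: (boolP [exists a, inl a \in S]) => [/existsP [a ha]|na].
      apply: le_trans (weight_mixed ha hb) _.
      case: nc => h; [have := noncomplete_ge1 s1 i1 h | have := noncomplete_ge1 s2 i2 h];
        move=> h1; apply: le_trans h1 _; rewrite le_max lexx ?orbT //.
    pose S2 := [set b | inr b \in S].
    have eS : S = inr @: S2.
      apply/setP => -[x|x]; last by rewrite (mem_imset _ _ inr_inj) inE.
      apply/idP/imsetP => [hx|[y _ //]]; exfalso; move/negP: na; apply; apply/existsP; by exists x.
    rewrite eS (weight_img inr_inj fe2); apply: le_trans (gamma_ge_cc _) _.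
      by rewrite -(cc_img inr_inj fe2) -eS.
    by rewrite le_max lexx orbT.
  pose S1 := [set a | inl a \in S].
  have eS : S = inl @: S1.
    apply/setP => -[x|x]; first by rewrite (mem_imset _ _ inl_inj) inE.
    apply/idP/imsetP => [hx|[y _ //]]; exfalso; move/negP: nb; apply; apply/existsP; by exists x.
  rewrite eS (weight_img inl_inj fe1); apply: le_trans (gamma_ge_cc _) _.
    by rewrite -(cc_img inl_inj fe1) -eS.
  by rewrite le_max lexx.
rewrite ge_max; apply/andP; split.
  apply: gamma_le; first exact: gamma_ge0.
  move=> S1 cc1; rewrite -(weight_img inl_inj fe1); apply: gamma_ge_cc.
  by rewrite (cc_img inl_inj fe1).
apply: gamma_le; first exact: gamma_ge0.
move=> S2 cc2; rewrite -(weight_img inr_inj fe2); apply: gamma_ge_cc.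
by rewrite (cc_img inr_inj fe2).
Qed.

End Gam.

End MG.
Import MG.

Theorem mainTheorem3 (R : realType) (V1 V2 : finType) (e1 : rel V1) (e2 : rel V2)
  (b1 b2 : R) :
  simple_graph e1 -> simple_graph e2 ->
  0 < b1 -> 0 < b2 ->
  (fun n : nat => ln ((s_n e1 n)%:R : R) / (n%:R * ln (n%:R : R))) @ \oo --> b1 ->
  (fun n : nat => ln ((s_n e2 n)%:R : R) / (n%:R * ln (n%:R : R))) @ \oo --> b2 ->
  ((fun n : nat => ln ((s_n (join_rel e1 e2) n)%:R : R) / (n%:R * ln (n%:R : R)))
     @ \oo --> Num.max b1 b2) /\
  (~ complete_graph e1 \/ ~ complete_graph e2 ->
     gamma R (join_rel e1 e2) = Num.max (gamma R e1) (gamma R e2)).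
Proof.
move=> g1 g2 hb1 hb2 h1 h2; split; last exact: gamma_join.
have [s1 _] := g1; have [s2 _] := g2.
apply: (@asym R (s_n e1) (s_n e2) (s_n (join_rel e1 e2)) #|V2| b1 b2 hb1 hb2 h1 h2
   (@sn_join_l _ _ e1 e2) (@sn_join_r _ _ e1 e2)).
move=> n hn; have := @sn_join_le _ _ e1 e2 n.
rewrite -(ler_nat R) natr_sum => h; apply: le_trans h _; apply: ler_sum => ik _.
by rewrite /sA /sB; case: ifP => _; rewrite ?mul0n.
Qed.
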